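(* Let $\mathcal{A}=(T(\Sigma,X),\Rightarrow_\Pi)$ be an abstract reduction system closed under substitutions, and let $(u_1\Rightarrow_{w_1}v_1,\ u_2\Rightarrow_{w_2}v_2)$ be a recurrent pair in $\mathcal{A}$, with $c_1,c_2,x,y,s,t,n_1,n_2,n_3,n_4$ as in the definition of recurrent pair. Then for all $m,n\in\mathbb{N}$ with $n\ge n_2$, the term $c_1[m,n]$ starts an infinite $(\Rightarrow_{w_1}^{*}\circ\Rightarrow_{w_2})$-chain, i.e. there is an infinite sequence $a_0=c_1[m,n],a_1,a_2,\dots$ of terms with $a_k\ (\Rightarrow_{w_1}^{*}\circ\Rightarrow_{w_2})\ a_{k+1}$ for all $k\in\mathbb{N}$.
   Context: Fix a signature $\Sigma$, a countably infinite set $X$ of variables disjoint from $\Sigma$, and two distinct fresh hole constants $\square,\square'\notin\Sigma\cup X$. Terms are elements of $T(\Sigma,X)$; substitutions $\theta$ (maps $X\to T(\Sigma,X)$ moving finitely many variables) act homomorphically; $\mathit{Var}$ denotes the variable set. An abstract reduction system $(A,\Rightarrow_\Pi)$ has $\Rightarrow_\Pi=\bigcup_{\pi\in\Pi}\Rightarrow_\pi$; for $w=\langle\pi_1,\dots,\pi_k\rangle\in\Pi^*$, $\Rightarrow_w=\Rightarrow_{\pi_1}\circ\cdots\circ\Rightarrow_{\pi_k}$ ($\Rightarrow_\epsilon$ the identity), where $\phi\circ\varphi=\{(a,a'')\mid\exists a_1,(a,a_1)\in\phi,(a_1,a'')\in\varphi\}$; $\Rightarrow_w^*$ is the reflexive-transitive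 closure of $\Rightarrow_w$. It is closed under substitutions if for all $s,t\in A$, $w\in\Pi^*$ and substitutions $\theta$, $s\Rightarrow_w t$ implies $s\theta\Rightarrow_w t\theta$. Let $c_1$ be a term over $\Sigma\cup\{\square,\square'\}$ and $X$ containing at least one occurrence of $\square$ and of $\square'$, and $c_1[t,t']$ the result of replacing all $\square$ by $t$ and all $\square'$ by $t'$. Let $c_2$ be a term over $\Sigma\cup\{\square\}$ and $X$ containing at least one $\square$ (and no $\square'$), $c_2[t]$ the result of replacing all $\square$ by $t$, $c_2^0[t]=t$, $c_2^{k+1}[t]=c_2[c_2^k[t]]$. A recurrent pair in $\mathcal{A}$ is a pair of chains $u_1\Rightarrow_{w_1}v_1$ and $u_2\Rightarrow_{w_2}v_2$ ($w_1,w_2\in\Pi^*$) such that: $u_1=c_1[x,c_2[y]]$, $v_1=c_1[c_2^{n_1}[x],y]$, $u_2=c_1[x,c_2^{n_2}[s]]$, $v_2=c_1[c_2^{n_3}[t],c_2^{n_4}[x]]$ for variables $x\neq y$ with $\{x,y\}\cap\mathit{Var}(c_1)=\emptyset$, a term $s$, naturals $n_1,n_2,n_3,n_4$; $\mathit{Var}(c_2)=\mathit{Var}(s)=\emptyset$; $t\in\{x,s\}$; and $n_4\ge n_2$. For $m,n\in\mathbb{N}$, $c_1[m,n]$ denotes the term $c_1[c_2^m[s],c_2^n[s]]$. *)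

(* Defs.v *)
From Stdlib Require Import List Arith Relations.
Import ListNotations.

Inductive term (F V : Type) : Type :=
| Var : V -> term F V
| Fun : F -> list (term F V) -> term F V.
Arguments Var {F V} _.
Arguments Fun {F V} _ _.

(* Well-formedness: each symbol applied to exactly ar f arguments.
   T(Sigma,X) = the well-formed terms. *)
Fixpoint wf {F V : Type} (ar : F -> nat) (t : term F V) : Prop :=
  match t with
  | Var _ => True
  | Fun f args =>
      length args = ar f /\
      (fix wfl (l : list (term F V)) : Prop :=
         match l with nil => True | a :: l' => wf ar a /\ wfl l' end) args
  end.

Fixpoint vars {F V : Type} (t : term F V) : list V :=
  match t with
  | Var x => [x]
  | Fun _ args => flat_map vars args
  end.

Fixpoint subst {F V : Type} (theta : V -> term F V) (t : term F V) : term F V :=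
  match t with
  | Var x => theta x
  | Fun f args => Fun f (map (subst theta) args)
  end.

Definition is_subst {F V : Type} (ar : F -> nat) (theta : V -> term F V) : Prop :=
  (forall v, wf ar (theta v)) /\
  exists l : list V, forall v, ~ In v l -> theta v = Var v.

Inductive hole : Type := Box | Box'.

Definition ctx (F V : Type) : Type := term (F + hole) V.

Definition ar_ext {F : Type} (ar : F -> nat) (g : F + hole) : nat :=
  match g with inl f => ar f | inr _ => 0 end.

Fixpoint hole_occurs {F V : Type} (h : hole) (c : ctx F V) : Prop :=
  match c with
  | Var _ => False
  | Fun (inl _) args =>
      (fix occl (l : list (ctx F V)) : Prop :=
         match l with nil => False | a :: l' => hole_occurs h a \/ occl l' end) args
  | Fun (inr h') _ => h' = h
  end.

Fixpoint fill2 {F V : Type} (c : ctx F V) (t t' : term F V) : term F V :=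
  match c with
  | Var x => Var x
  | Fun (inl f) args => Fun f (map (fun a => fill2 a t t') args)
  | Fun (inr Box) _ => t
  | Fun (inr Box') _ => t'
  end.

Definition fill1 {F V : Type} (c : ctx F V) (t : term F V) : term F V :=
  fill2 c t t.

Fixpoint fill_iter {F V : Type} (c : ctx F V) (k : nat) (t : term F V) : term F V :=
  match k with
  | 0 => t
  | S k' => fill1 c (fill_iter c k' t)
  end.

(* Abstract reduction system on terms: relations =>_pi indexed by pi in Pi.
   =>_w for a word w = <pi_1,...,pi_k> is the composition
   =>_pi_1 o ... o =>_pi_k (apply pi_1 first), =>_epsilon the identity. *)
Fixpoint steps {A Pi : Type} (R : Pi -> A -> A -> Prop) (w : list Pi) (a b : A) : Prop :=
  match w with
  | nil => a = b
  | p :: w' => exists a1, R p a a1 /\ steps R w' a1 b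
  end.

Definition closed_under_subst {F V Pi : Type} (ar : F -> nat)
  (R : Pi -> term F V -> term F V -> Prop) : Prop :=
  forall (s t : term F V) (w : list Pi) (theta : V -> term F V),
    wf ar s -> wf ar t -> is_subst ar theta ->
    steps R w s t -> steps R w (subst theta s) (subst theta t).

Definition star_then {A Pi : Type} (R : Pi -> A -> A -> Prop) (w1 w2 : list Pi)
  (a b : A) : Prop :=
  exists c, clos_refl_trans A (steps R w1) a c /\ steps R w2 c b.

(* Main.v *)
Require Import Defs.
From Stdlib Require Import List Arith Relations Lia.
Import ListNotations.

Fixpoint term_ind' {F V : Type} (P : term F V -> Prop)
  (Hv : forall v, P (Var v)) (Hf : forall f l, Forall P l -> P (Fun f l))
  (t : term F V) : P t :=
  match t with
  | Var v => Hv v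
  | Fun f l => Hf f l ((fix go (l : list (term F V)) : Forall P l :=
      match l with nil => Forall_nil _
      | a :: l' => Forall_cons _ (term_ind' P Hv Hf a) (go l') end) l)
  end.

Lemma wf_Fun {F V} (ar : F -> nat) f (l : list (term F V)) :
  wf ar (Fun f l) <-> (length l = ar f /\ Forall (wf ar) l).
Proof.
  simpl. split; intros [H1 H2]; split; auto; clear H1.
  - induction l; simpl in *; [constructor | destruct H2; constructor; auto].
  - induction l; simpl in *; auto. inversion H2; subst; split; auto; apply IHl; auto.
Qed.

Lemma subst_fill2 {F V} (c : ctx F V) a b theta :
  (forall z, In z (vars c) -> theta z = Var z) ->
  subst theta (fill2 c a b) = fill2 c (subst theta a) (subst theta b).
Proof.
  induction c as [v|f l IH] using term_ind'; intros H.
  - simpl. apply H. simpl; auto.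
  - destruct f as [f|[|]]; simpl; auto.
    f_equal. rewrite map_map. apply map_ext_in. intros c Hc.
    rewrite Forall_forall in IH. apply IH; auto.
    intros z Hz. apply H. simpl. apply in_flat_map. eauto.
Qed.

Lemma subst_ground {F V} (u : term F V) theta :
  (forall z, In z (vars u) -> theta z = Var z) -> subst theta u = u.
Proof.
  induction u as [v|f l IH] using term_ind'; intros H.
  - simpl. apply H. simpl; auto.
  - simpl. f_equal. rewrite <- (map_id l) at 2. apply map_ext_in. intros c Hc.
    rewrite Forall_forall in IH. apply IH; auto.
    intros z Hz. apply H. simpl. apply in_flat_map. eauto.
Qed.

Lemma wf_fill2 {F V} ar (c : ctx F V) a b :
  wf (ar_ext ar) c -> wf ar a -> wf ar b -> wf ar (fill2 c a b).
Proof.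
  induction c as [v|f l IH] using term_ind'; intros Hc Ha Hb.
  - simpl; auto.
  - destruct f as [f|[|]]; simpl; auto.
    apply wf_Fun in Hc. destruct Hc as [Hl Hw]. apply wf_Fun. split.
    + rewrite length_map. exact Hl.
    + rewrite Forall_forall in *. intros t Ht. apply in_map_iff in Ht.
      destruct Ht as [c [<- Hin]]. apply IH; auto.
Qed.

Lemma fill_iter_add {F V} (c : ctx F V) a b u :
  fill_iter c a (fill_iter c b u) = fill_iter c (a + b) u.
Proof. induction a; simpl; auto. rewrite IHa. reflexivity. Qed.

Lemma subst_fill_iter {F V} (c : ctx F V) k u theta :
  vars c = nil -> subst theta (fill_iter c k u) = fill_iter c k (subst theta u).
Proof.
  intros Hc. induction k; simpl; auto. unfold fill1. rewrite subst_fill2.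
  - rewrite IHk; auto.
  - rewrite Hc; simpl; tauto.
Qed.

Lemma wf_fill_iter {F V} ar (c : ctx F V) k u :
  wf (ar_ext ar) c -> wf ar u -> wf ar (fill_iter c k u).
Proof. intros. induction k; simpl; auto. unfold fill1; apply wf_fill2; auto. Qed.

Lemma steps_wf {F V Pi} ar (R : Pi -> term F V -> term F V -> Prop)
  (HA : forall p a b, R p a b -> wf ar a /\ wf ar b) :
  forall w p a b, steps R (p :: w) a b -> wf ar a /\ wf ar b.
Proof.
  induction w as [|q w IH]; intros p a b [a1 [H1 H2]].
  - simpl in H2; subst. eauto.
  - split. apply (HA _ _ _ H1). apply (IH q a1 b H2).
Qed.

Lemma steps_subst {F V Pi} ar (R : Pi -> term F V -> term F V -> Prop)
  (HA : forall p a b, R p a b -> wf ar a /\ wf ar b)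
  (Hclosed : closed_under_subst ar R) w a b theta :
  is_subst ar theta -> steps R w a b -> steps R w (subst theta a) (subst theta b).
Proof.
  intros Ht H. destruct w as [|p w].
  - simpl in *. subst; auto.
  - destruct (steps_wf ar R HA w p a b H). apply Hclosed; auto.
Qed.

Theorem corollary13
  (F : Type) (ar : F -> nat) (Pi : Type)
  (R : Pi -> term F nat -> term F nat -> Prop)
  (* the relations live on A = T(Sigma, X) *)
  (HA : forall p a b, R p a b -> wf ar a /\ wf ar b)
  (Hclosed : closed_under_subst ar R)
  (c1 c2 : ctx F nat) (x y : nat) (s t : term F nat)
  (n1 n2 n3 n4 : nat) (w1 w2 : list Pi)
  (Hc1wf : wf (ar_ext ar) c1) (Hc2wf : wf (ar_ext ar) c2) (Hswf : wf ar s)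
  (Hc1box : hole_occurs Box c1) (Hc1box' : hole_occurs Box' c1)
  (Hc2box : hole_occurs Box c2) (Hc2nobox' : ~ hole_occurs Box' c2)
  (Hxy : x <> y) (Hx : ~ In x (vars c1)) (Hy : ~ In y (vars c1))
  (Hc2var : vars c2 = nil) (Hsvar : vars s = nil)
  (Ht : t = Var x \/ t = s)
  (Hn42 : n2 <= n4)
  (Hchain1 : steps R w1 (fill2 c1 (Var x) (fill1 c2 (Var y)))
                        (fill2 c1 (fill_iter c2 n1 (Var x)) (Var y)))
  (Hchain2 : steps R w2 (fill2 c1 (Var x) (fill_iter c2 n2 s))
                        (fill2 c1 (fill_iter c2 n3 t) (fill_iter c2 n4 (Var x)))) :
  forall m n : nat, n2 <= n ->
    exists a : nat -> term F nat,
      a 0 = fill2 c1 (fill_iter c2 m s) (fill_iter c2 n s) /\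
      forall k, star_then R w1 w2 (a k) (a (S k)).
Proof.
  set (C := fun p : nat * nat => fill2 c1 (fill_iter c2 (fst p) s) (fill_iter c2 (snd p) s)).
  set (th := fun (A B : term F nat) (z : nat) =>
         if Nat.eqb z x then A else if Nat.eqb z y then B else Var z).
  assert (Hth : forall A B, wf ar A -> wf ar B -> is_subst ar (th A B)).
  { intros A B HA' HB. split.
    - intros v. unfold th. destruct (Nat.eqb v x); auto.
      destruct (Nat.eqb v y); simpl; auto.
    - exists [x; y]. intros v Hv. unfold th.
      destruct (Nat.eqb_spec v x). subst; simpl in Hv; tauto.
      destruct (Nat.eqb_spec v y). subst; simpl in Hv; tauto. auto. }
  assert (Hc1id : forall A B z, In z (vars c1) -> th A B z = Var z).
  { intros A B z Hz. unfold th.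
    destruct (Nat.eqb_spec z x). subst; tauto.
    destruct (Nat.eqb_spec z y). subst; tauto. auto. }
  assert (Hsg : forall theta, subst theta s = s).
  { intros. apply subst_ground. rewrite Hsvar. simpl; tauto. }
  assert (Hwfs : forall k, wf ar (fill_iter c2 k s)).
  { intros; apply wf_fill_iter; auto. }
  assert (Hw1 : forall m n j, j <= n ->
     clos_refl_trans _ (steps R w1) (C (m, n)) (C (m + j * n1, n - j))).
  { intros m n j. induction j; intros Hj.
    - replace (m + 0 * n1) with m by lia. replace (n - 0) with n by lia. apply rt_refl.
    - eapply rt_trans. apply IHj; lia. apply rt_step.
      set (A := fill_iter c2 (m + j * n1) s).
      set (B := fill_iter c2 (n - S j) s).
      pose proof (steps_subst ar R HA Hclosed _ _ _ (th A B) (Hth A B (Hwfs _) (Hwfs _)) Hchain1) as H.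
      rewrite !subst_fill2 in H by auto.
      unfold fill1 in H. rewrite !subst_fill2 in H by (rewrite Hc2var; simpl; tauto).
      rewrite subst_fill_iter in H by auto.
      simpl in H. unfold th in H. rewrite Nat.eqb_refl in H.
      destruct (Nat.eqb_spec y x); [congruence|]. rewrite Nat.eqb_refl in H.
      unfold C; cbn [fst snd]. unfold A, B in H. rewrite fill_iter_add in H.
      replace (n - j) with (S (n - S j)) by lia.
      replace (m + S j * n1) with (n1 + (m + j * n1)) by lia.
      exact H. }
  assert (Hg : exists e : bool, forall M,
     steps R w2 (C (M, n2)) (C (n3 + (if e then M else 0), n4 + M))).
  { assert (Hgen : forall M, steps R w2 (C (M, n2))
       (fill2 c1 (fill_iter c2 n3 (subst (th (fill_iter c2 M s) (Var y)) t))
                 (fill_iter c2 (n4 + M) s))).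
    { intros M.
      pose proof (steps_subst ar R HA Hclosed _ _ _ _ (Hth (fill_iter c2 M s) (Var y) (Hwfs _) I) Hchain2) as H.
      rewrite !subst_fill2 in H by auto.
      rewrite !subst_fill_iter in H by auto. rewrite Hsg in H.
      simpl in H. unfold th at 1 3 in H. rewrite Nat.eqb_refl in H.
      rewrite fill_iter_add in H. exact H. }
    destruct Ht as [-> | ->].
    - exists true. intros M. pose proof (Hgen M) as H. simpl in H. unfold th in H.
      rewrite Nat.eqb_refl, fill_iter_add in H. exact H.
    - exists false. intros M. pose proof (Hgen M) as H. rewrite Hsg in H.
      replace (n3 + 0) with n3 by lia. exact H. }
  destruct Hg as [e Hg].
  set (next := fun p : nat * nat =>
     let M := fst p + (snd p - n2) * n1 in (n3 + (if e then M else 0), n4 + M)).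
  assert (Hstep : forall p, n2 <= snd p -> star_then R w1 w2 (C p) (C (next p)) /\ n2 <= snd (next p)).
  { intros [m n] Hn. simpl in Hn. split.
    - exists (C (m + (n - n2) * n1, n2)). split.
      + replace n2 with (n - (n - n2)) at 2 by lia. apply Hw1; lia.
      + apply Hg.
    - simpl. lia. }
  intros m n Hn.
  exists (fun k => C (Nat.iter k next (m, n))).
  assert (Hinv : forall k, n2 <= snd (Nat.iter k next (m, n))).
  { induction k; simpl; auto. apply Hstep; auto. }
  split. reflexivity.
  intros k. simpl. apply Hstep. auto.
Qed.
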